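(* Every minimally $1/2$-tough claw-free graph has a vertex of degree $1$.
   Context: All graphs are finite, simple and undirected. A graph is claw-free if it contains no induced subgraph isomorphic to $K_{1,3}$. $\omega(H)$ denotes the number of components of $H$. A cutset of $G$ is a vertex set $S$ with $G-S$ disconnected. For positive real $t$, $G$ is $t$-tough if $\omega(G-S)\le |S|/t$ for every cutset $S$; the toughness $\tau(G)$ is the largest such $t$, with $\tau(K_n)=\infty$ for all $n\ge1$. $G$ is minimally $t$-tough if $\tau(G)=t$ and $\tau(G-e)<t$ for every edge $e$ of $G$. *)

(* Defs.v *)
From mathcomp Require Import all_boot all_order all_algebra.
Set Implicit Arguments. Unset Strict Implicit. Unset Printing Implicit Defensive.
Import Order.TTheory GRing.Theory Num.Theory.

Section Graphs.
Variable T : finType.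

Definition simple_graph (e : rel T) : Prop := symmetric e /\ irreflexive e.

Definition del_rel (e : rel T) (S : {set T}) : rel T :=
  fun x y => [&& e x y, x \notin S & y \notin S].

Definition ncomp (e : rel T) (S : {set T}) : nat :=
  #|[set [set y in ~: S | connect (del_rel e S) x y] | x in ~: S]|.

Definition cutset (e : rel T) (S : {set T}) : Prop := 1 < ncomp e S.

Definition tough (e : rel T) (t : rat) : Prop :=
  forall S : {set T}, cutset e S -> ((ncomp e S)%:R <= (#|S|)%:R / t)%R.

(* tau(G) = t : t is the largest (supremum) value for which G is t-tough;
   t-toughness is defined for positive t, and tau = 0 for disconnected
   graphs (no positive t works).  For complete graphs no such t exists
   (tau = infinity). *)
Definition tau_is (e : rel T) (t : rat) : Prop :=
  [/\ (0 <= t)%R,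
      (forall s : rat, (0 < s)%R -> (s <= t)%R -> tough e s) &
      forall s : rat, (t < s)%R -> ~ tough e s].

Definition del_edge (e : rel T) (u v : T) : rel T :=
  fun x y => e x y && ~~ (((x == u) && (y == v)) || ((x == v) && (y == u))).

(* tau(G) < t (tau = infinity, i.e. no cutset, never satisfies this) *)
Definition toughness_lt (e : rel T) (t : rat) : Prop :=
  exists t' : rat, tau_is e t' /\ (t' < t)%R.

Definition minimally_tough (e : rel T) (t : rat) : Prop :=
  tau_is e t /\
  forall u v : T, e u v -> toughness_lt (del_edge e u v) t.

Definition claw_free (e : rel T) : Prop :=
  ~ exists x a b c : T,
      [/\ e x a, e x b, e x c,
          [&& a != b, a != c & b != c] &
          [&& ~~ e a b, ~~ e a c & ~~ e b c]].

Definition deg (e : rel T) (x : T) : nat := #|[set y | e x y]|.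

End Graphs.

(* Main.v *)
Require Import Defs.
From mathcomp Require Import all_boot all_order all_algebra.
From mathcomp Require Import lra.
Set Implicit Arguments. Unset Strict Implicit. Unset Printing Implicit Defensive.
Import Order.TTheory GRing.Theory Num.Theory.

Lemma ratlem (m n : nat) : ((m%:R : rat) <= n%:R / (1 / 2))%R = (m <= n * 2)%N.
Proof. by rewrite mul1r invrK -natrM ler_nat. Qed.

Lemma half_pos : (0 < (1 / 2 : rat))%R. Proof. lra. Qed.
Lemma half_lt1 : ((1 / 2 : rat) < 1)%R. Proof. lra. Qed.

Lemma GC (T : finType) (R : rel T) (B : pred T) z t :
  z \in B -> (forall u v, connect R z u -> u \in B -> R u v -> v \in B) ->
  connect R z t -> t \in B.
Proof.
move=> zB H /connectP [p pth ->].
suff: forall c, connect R z c -> c \in B -> path R c p -> last c p \in B.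
  by apply; rewrite ?connect0.
elim: p {pth} => [|v p IH] c zc cB //= /andP [Rcv pv].
apply: IH pv; first exact: connect_trans zc (connect1 Rcv).
exact: H zc cB Rcv.
Qed.

Lemma first_step (T : finType) (R : rel T) p q :
  connect R p q -> p != q -> exists b, R p b /\ connect R b q.
Proof.
case/connectP => [[|b s]] /=; first by move=> _ ->; rewrite eqxx.
case/andP => Rpb pth -> _; exists b; split => //; apply/connectP; by exists s.
Qed.

Lemma exit_lemma (T : finType) (R : rel T) (S : {set T}) p q :
  connect R p q -> p \notin S -> q \in S ->
  exists r1 r2, [/\ connect (del_rel R S) p r1, r1 \notin S, r2 \in S & R r1 r2].
Proof.
case/connectP => s pth ->.
elim: s p pth => [|v s IH] p /=; first by move=> _ pS; rewrite (negPf pS).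
case/andP=> Rpv pth pS lS.
case vS: (v \in S); first by exists p, v; rewrite connect0.
have [r1 [r2 [c r1S r2S Rr]]] := IH v pth (negbT vS) lS.
exists r1, r2; split => //; apply: connect_trans c.
by apply: connect1; rewrite /del_rel Rpv pS vS.
Qed.

Definition comp (T : finType) (R : rel T) (S : {set T}) c :=
  [set t in ~: S | connect (del_rel R S) c t].

Lemma ncompE (T : finType) (R : rel T) (S : {set T}) :
  ncomp R S = #|[set comp R S c | c in ~: S]|.
Proof. by []. Qed.

Lemma del_rel_sym (T : finType) (R : rel T) (S : {set T}) : symmetric R -> symmetric (del_rel R S).
Proof. by move=> sR a b; rewrite /del_rel sR; congr andb; apply: andbC. Qed.

Lemma del_edge_sym (T : finType) (e : rel T) x y : symmetric e -> symmetric (del_edge e x y).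
Proof.
move=> se a b; rewrite /del_edge se; congr (andb _ (negb _)).
by rewrite orbC [(b == x) && _]andbC [(b == y) && _]andbC.
Qed.

Lemma mem_comp (T : finType) (R : rel T) (S : {set T}) c t :
  (t \in comp R S c) = (t \notin S) && connect (del_rel R S) c t.
Proof. by rewrite !inE. Qed.

Lemma comp_eq (T : finType) (R : rel T) (S : {set T}) p q : symmetric R ->
  connect (del_rel R S) p q -> comp R S p = comp R S q.
Proof.
move=> sR c; apply/setP => t; rewrite !mem_comp.
have cs := sym_connect_sym (del_rel_sym S sR).
case: (t \in S) => //=; apply/idP/idP => h.
  by rewrite cs in c; exact: connect_trans c h.
exact: connect_trans c h.
Qed.

Lemma conn_notin (T : finType) (R : rel T) (S : {set T}) p q : p \notin S ->
  connect (del_rel R S) p q -> q \notin S.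
Proof.
move=> pS c; apply: (GC (B := [pred t | t \notin S])) c => //.
by move=> u v _ _ /and3P [].
Qed.

Lemma NC2 (T : finType) (R : rel T) (S : {set T}) p q : p \notin S -> q \notin S ->
  ~~ connect (del_rel R S) p q -> 1 < ncomp R S.
Proof.
move=> pS qS nc; rewrite ncompE; apply/card_gt1P; exists (comp R S p), (comp R S q); split.
- by apply: imset_f; rewrite in_setC.
- by apply: imset_f; rewrite in_setC.
apply/eqP => E; have: q \in comp R S q by rewrite mem_comp qS connect0.
by rewrite -E mem_comp (negPf nc) andbF.
Qed.

Lemma NC1 (T : finType) (R : rel T) (S : {set T}) : symmetric R -> 1 < ncomp R S ->
  exists p q, [/\ p \notin S, q \notin S & ~~ connect (del_rel R S) p q].
Proof.
move=> sR; rewrite ncompE; case/card_gt1P => C1 [C2 [/imsetP [p pS ->] /imsetP [q qS ->] ne]].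
exists p, q; rewrite in_setC in pS; rewrite in_setC in qS; split => //.
by apply/negP => c; rewrite (comp_eq sR c) eqxx in ne.
Qed.

Lemma keyK (T : finType) (e : rel T) : symmetric e -> irreflexive e -> claw_free e ->
  forall x y, e x y -> (forall p q, connect (del_edge e x y) p q) ->
  forall S : {set T}, (exists s0, s0 \in S) -> #|S| * 2 < ncomp (del_edge e x y) S ->
  exists s, [/\ s \in S, x \notin S, y \notin S &
     ~~ connect (del_rel (del_edge e x y) S) x y] /\ (e s x /\ e s y) /\
   (exists d, [/\ d \notin S, e s d, ~~ connect (del_rel (del_edge e x y) S) x d
                 & ~~ connect (del_rel (del_edge e x y) S) y d]) /\
   (forall t r, connect (del_rel (del_edge e x y) S) x t \/
                connect (del_rel (del_edge e x y) S) y t ->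
      r \in S -> e t r -> r = s /\ (t = x \/ t = y)).
Proof.
move=> sym irr claw x y exy Hcon S [s0 s0S] cut.
set H := del_edge e x y.
set R := del_rel H S.
set Comps := [set comp H S c | c in ~: S].
have sH : symmetric H by apply: del_edge_sym.
have sR : symmetric R by apply: del_rel_sym.
have cs := sym_connect_sym sR.
have HE : forall a b, H a b -> e a b by move=> a b /andP [].
have Adj : forall p q, p \notin S -> q \notin S -> e p q -> comp H S p != comp H S q ->
    (p == x) && (q == y) || (p == y) && (q == x).
  move=> p q pS qS epq ne; apply/negPn/negP => nxy; move/eqP: ne; apply.
  apply: comp_eq sH _; apply: connect1.
  by rewrite /R /del_rel /H /del_edge epq nxy pS qS.
have memC : forall C, C \in Comps -> forall t, t \in C -> C = comp H S t /\ t \notin S.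
  move=> C /imsetP [c cS ->] t; rewrite mem_comp => /andP [tS ct]; split => //.
  exact: comp_eq sH ct.
have compC : forall c, c \notin S -> comp H S c \in Comps.
  by move=> c cS; apply: imset_f; rewrite in_setC.
pose valid (g : {set T} -> T) := forall C, C \in Comps -> g C \in S /\ exists t, t \in C /\ e (g C) t.
have Exists3 : forall g, valid g -> exists s d,
    [/\ s \in S, x \notin S, y \notin S & comp H S x != comp H S y] /\
        (g (comp H S x) = s /\ g (comp H S y) = s) /\
    [/\ d \notin S, e s d, g (comp H S d) = s, comp H S d != comp H S x
      & comp H S d != comp H S y].
  move=> g vg.
  have part : #|Comps| = \sum_(s in S) #|[set C in Comps | g C == s]|.
    rewrite -[LHS]sum1_card (partition_big g (mem S)) /=; last by move=> C /vg [].
    apply: eq_bigr => s _; rewrite -sum1_card; apply: eq_bigl => C; by rewrite inE.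
  have [s sS big] : exists2 s, s \in S & 2 < #|[set C in Comps | g C == s]|.
    case: (boolP [exists s in S, 2 < #|[set C in Comps | g C == s]|]) => [/exists_inP //|].
    move/exists_inPn => h; exfalso.
    have : \sum_(s in S) #|[set C in Comps | g C == s]| <= \sum_(s in S) 2.
      by apply: leq_sum => s sS; rewrite leqNgt h.
    by rewrite sum_nat_const -part leqNgt -ncompE cut.
  case/card_gt2P: big => C1 [C2 [C3 [[m1 m2 m3] [n12 n23 n31]]]].
  move: m1 m2 m3; rewrite !inE => /andP [C1C /eqP g1] /andP [C2C /eqP g2] /andP [C3C /eqP g3].
  have [_ [c1 [c1C e1]]] := vg _ C1C; have [_ [c2 [c2C e2]]] := vg _ C2C.
  have [_ [c3 [c3C e3]]] := vg _ C3C.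
  rewrite g1 in e1; rewrite g2 in e2; rewrite g3 in e3.
  have [E1 c1S] := memC _ C1C _ c1C; have [E2 c2S] := memC _ C2C _ c2C.
  have [E3 c3S] := memC _ C3C _ c3C.
  subst C1 C2 C3.
  have H3 : forall a b c, a \notin S -> b \notin S -> c \notin S ->
      comp H S a != comp H S b -> comp H S a != comp H S c -> comp H S b != comp H S c ->
      g (comp H S a) = s -> g (comp H S b) = s -> g (comp H S c) = s -> e s c -> e a b ->
      exists s d,
    [/\ s \in S, x \notin S, y \notin S & comp H S x != comp H S y] /\
        (g (comp H S x) = s /\ g (comp H S y) = s) /\
    [/\ d \notin S, e s d, g (comp H S d) = s, comp H S d != comp H S x
      & comp H S d != comp H S y].
    move=> a b c aS bS cS nab nac nbc ga gb gc esc eab.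
    case/orP: (Adj a b aS bS eab nab) => /andP [/eqP ax /eqP bx]; subst a b.
      by exists s, c; split; [|split]; split => //; rewrite eq_sym.
    by exists s, c; split; [|split]; split => //; rewrite eq_sym.
  have dist : forall a b, comp H S a != comp H S b -> a != b.
    by move=> a b; apply: contra => /eqP ->.
  have : e c1 c2 || e c1 c3 || e c2 c3.
    apply/negPn/negP => h; apply: claw; exists s, c1, c2, c3; split => //.
      by rewrite !dist // eq_sym.
    by move: h; case: (e c1 c2); case: (e c1 c3); case: (e c2 c3).
  case/orP => [/orP [] | ] eab.
  - by apply: (H3 c1 c2 c3) => //; rewrite eq_sym.
  - by apply: (H3 c1 c3 c2) => //; rewrite eq_sym.
  - by apply: (H3 c2 c3 c1) => //; rewrite eq_sym.

pose g0 (C : {set T}) := if [pick s in S | [exists t in C, e s t]] is Some s then s else x.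
have vg0 : valid g0.
  move=> C CC; rewrite /g0; case: pickP => [s /andP [sS /existsP [t /andP [tC est]]] | none].
    by split => //; exists t.
  exfalso; case/imsetP: CC => c cS CE; rewrite in_setC in cS.
  have [r1 [r2 [c1 r1S r2S Hr]]] := exit_lemma (Hcon c s0) cS s0S.
  move: (none r2); rewrite r2S /= => /negbT/negP; apply; apply/existsP; exists r1; apply/andP; split.
    by rewrite CE mem_comp r1S.
  by rewrite sym; apply: HE.
have [s [d [[sS xS yS nxy] [[g0x g0y] [dS esd g0d ndx ndy]]]]] := Exists3 g0 vg0.
have [_ [p [pC esp]]] := vg0 _ (compC _ xS).
have [_ [q [qC esq]]] := vg0 _ (compC _ yS).
rewrite g0x in esp; rewrite g0y in esq.
have [Ep pS] := memC _ (compC _ xS) _ pC.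
have [Eq qS] := memC _ (compC _ yS) _ qC.
have clawH : forall a b, a \notin S -> b \notin S -> comp H S a != comp H S b ->
    comp H S a != comp H S d -> comp H S b != comp H S d -> e s a -> e s b ->
    (a == x) && (b == y) || (a == y) && (b == x).
  move=> a b aS bS nab nad nbd esa esb.
  have dist : forall a b, comp H S a != comp H S b -> a != b.
    by move=> a' b'; apply: contra => /eqP ->.
  have : e a b || e a d || e b d.
    apply/negPn/negP => h; apply: claw; exists s, a, b, d; split => //.
      by rewrite !dist.
    by move: h; case: (e a b); case: (e a d); case: (e b d).
  case/orP => [/orP [] | ] eab; first exact: Adj.
  - case/orP: (Adj a d aS dS eab nad) => /andP [_ /eqP dx]; subst d.
      by rewrite eqxx in ndy.
    by rewrite eqxx in ndx.
  - case/orP: (Adj b d bS dS eab nbd) => /andP [_ /eqP dx]; subst d.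
      by rewrite eqxx in ndy.
    by rewrite eqxx in ndx.
have [esx esy] : e s x /\ e s y.
  have := clawH p q pS qS; rewrite -Ep -Eq => /(_ nxy).
  rewrite eq_sym ndx eq_sym ndy => /(_ isT isT esp esq).
  case/orP => /andP [/eqP px /eqP qy]; subst p q; first by [].
  by rewrite Ep eqxx in nxy.
have ncxy : ~~ connect R x y by apply: contra nxy => c; rewrite (comp_eq sH c).
exists s; split; first by split.
split; first by [].
split.
  exists d; split => //.
    by apply: contra ndx => c; rewrite (comp_eq sH c).
  by apply: contra ndy => c; rewrite (comp_eq sH c).
have rs : forall z t r, (z = x \/ z = y) -> connect R z t -> r \in S -> e t r -> r = s.
  move=> z t r zxy czt rS etr; apply/eqP/negPn/negP => rs.
  have zS : z \notin S by case: zxy => ->.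
  have tS := conn_notin zS czt.
  pose g1 (C : {set T}) := if C == comp H S z then r else g0 C.
  have vg1 : valid g1.
    move=> C CC; rewrite /g1; case: eqP => [-> | _]; last exact: vg0.
    split => //; exists t; rewrite mem_comp tS czt; split => //; by rewrite sym.
  have [s' [d' [_ [[g1x g1y] _]]]] := Exists3 g1 vg1.
  move: g1x g1y; rewrite /g1.
  have nyx : comp H S y != comp H S x by rewrite eq_sym.
  case: zxy => zE; rewrite zE eqxx ?(negPf nxy) ?(negPf nyx) => g1x g1y.
    by move: rs; rewrite g1x -g1y g0y eqxx.
  by move: rs; rewrite g1y -g1x g0x eqxx.
move=> t r czt rS etr.
have zz : exists z, (z = x \/ z = y) /\ connect R z t by case: czt => c; [exists x | exists y]; split => //; [left|right].
case: zz => z [zxy czt'].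
have rE := rs z t r zxy czt' rS etr; split => //; subst r.
have zS : z \notin S by case: zxy => ->.
have tS := conn_notin zS czt'.
have ct : comp H S t = comp H S z by apply/esym/comp_eq.
case: zxy => ?; subst z.
- have := clawH t y tS yS; rewrite ct => /(_ nxy).
  rewrite eq_sym ndx eq_sym ndy sym => /(_ isT isT etr esy).
  by case/orP => /andP [/eqP -> _]; [left | right].
- have := clawH t x tS xS; rewrite ct eq_sym => /(_ nxy).
  rewrite eq_sym ndy eq_sym ndx sym => /(_ isT isT etr esx).
  by case/orP => /andP [/eqP -> _]; [left | right].
Qed.

Theorem mainTheorem13 (T : finType) (e : rel T) :
  simple_graph e -> claw_free e -> minimally_tough e (1 / 2)%R ->
  exists v : T, deg e v = 1%N.
Proof.
move=> [sym irr] claw [[_ tough12 ntough] minimal].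
case: (boolP [exists v, deg e v == 1]) => [/existsP [v /eqP]|/existsPn nodeg1]; first by exists v.
exfalso.
have t12 : tough e (1 / 2)%R := tough12 _ half_pos (lexx _).
have nt1 : ~ tough e 1%R := ntough 1%R half_lt1.
have del0 : forall R : rel T, del_rel R set0 =2 R by move=> R a b; rewrite /del_rel !inE !andbT.
have Gcon : forall p q, connect e p q.
  move=> p q; apply/negPn/negP => npq.
  have h : 1 < ncomp e set0 by apply: (NC2 (p := p) (q := q)); rewrite ?inE // (eq_connect (del0 e)).
  by move: (t12 _ h); rewrite ratlem cards0 mul0n leqNgt (ltn_trans _ h).
have two : forall v : T, exists w : T, w != v.
  move=> v; case: (boolP [exists w, w != v]) => [/existsP [w wv] | /existsPn hn]; first by exists w.
  exfalso; apply: nt1 => S /(NC1 sym) [p [q [_ _ npq]]]; exfalso.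
  have := hn p; have := hn q; rewrite !negbK => /eqP qv /eqP pv.
  by rewrite qv pv connect0 in npq.
have nbr : forall v : T, exists b, e v b.
  move=> v; have [w wv] := two v.
  have vw : v != w by rewrite eq_sym.
  have [b [evb _]] := first_step (Gcon v w) vw.
  by exists b.
have deg2 : forall v w : T, exists c, e v c /\ c != w.
  move=> v w.
  have : 1 < #|[set b | e v b]|.
    have [b evb] := nbr v.
    have : 0 < #|[set b | e v b]| by apply/card_gt0P; exists b; rewrite inE.
    move: (nodeg1 v); rewrite /deg; case: #|_| => [|[|n]] //.
  case/card_gt1P => b1 [b2 [b1N b2N ne]]; rewrite !inE in b1N b2N.
  case: (eqVneq b1 w) => [b1w | b1w]; last by exists b1.
  by exists b2; split => //; rewrite -b1w eq_sym.
have Hcon : forall x y, e x y -> connect (del_edge e x y) x y ->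
    forall p q, connect (del_edge e x y) p q.
  move=> x y exy cxy p q; apply: (connect_sub _ (Gcon p q)) => a b eab.
  case: (boolP ((a == x) && (b == y) || (a == y) && (b == x))) => h.
    case/orP: h => /andP [/eqP -> /eqP ->] //.
    by rewrite (sym_connect_sym (del_edge_sym x y sym)).
  by apply: connect1; rewrite /del_edge eab h.
have getS : forall x y, e x y -> connect (del_edge e x y) x y ->
    exists2 S : {set T}, (exists s0, s0 \in S) & #|S| * 2 < ncomp (del_edge e x y) S.
  move=> x y exy cxy.
  have [t' [[_ _ nt] lt']] := minimal x y exy.
  have nth := nt (1 / 2)%R lt'.
  case: (boolP [exists S : {set T}, (1 < ncomp (del_edge e x y) S) &&
                 (#|S| * 2 < ncomp (del_edge e x y) S)]) => [/existsP [S /andP [c1 c2]] | /existsPn hn]; last first.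
    exfalso; apply: nth => S cS; rewrite ratlem; move: (hn S).
    by rewrite /cutset in cS; rewrite cS /= -leqNgt.
  exists S => //.
  case: (set_0Vmem S) => [S0 | [s0 s0S]]; last by exists s0.
  exfalso; subst S.
  have [p [q [_ _ npq]]] := NC1 (del_edge_sym x y sym) c1.
  by rewrite (eq_connect (del0 _)) Hcon in npq.
have main : forall n (A : {set T}) a, #|A| <= n -> a \in A ->
    (forall t r, t \in A -> t != a -> e t r -> r \in A) ->
    (exists b, [/\ b \in A, b != a & e a b]) -> False.
  elim => [|n IH] A a.
    by move=> cA aA; move: cA; rewrite leqn0 => /eqP/cards0_eq A0; rewrite A0 inE in aA.
  move=> cA aA clos [x [xA xa eax]].
  have small : forall (Z : {set T}) z, Z \subset A :\ a -> z \in Z ->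
      (forall t r, t \in Z -> t != z -> e t r -> r \in Z) ->
      (exists b, [/\ b \in Z, b != z & e z b]) -> False.
    move=> Z z sZ; apply: (IH Z z); apply: leq_trans (subset_leq_card sZ) _.
    by move: cA; rewrite (cardsD1 a A) aA add1n ltnS.
  have exa : e x a by rewrite sym.
  have xAa : x \in A :\ a by rewrite !inE xa.
  case: (boolP (connect (del_edge e x a) x a)) => [cxa | ncxa]; last first.
    set H := del_edge e x a.
    apply: (small [set t | connect H x t] x).
    - apply/subsetP => t; rewrite inE => ct.
      apply: (GC (B := [pred t | t \in A :\ a])) ct => //= u v cu.
      rewrite !inE => /andP [ua uA] Huv; apply/andP; split.
        by apply: contraNneq ncxa => va; subst v; exact: connect_trans cu (connect1 Huv).
      by apply: clos uA ua _; case/andP: Huv.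
    - by rewrite inE connect0.
    - move=> t r; rewrite !inE => ct tx etr.
      have ta : t != a by apply: contraNneq ncxa => ta; subst t; exact: ct.
      apply: connect_trans ct (connect1 _).
      by rewrite /H /del_edge etr (negPf tx) (negPf ta).
    - have [c [exc ca]] := deg2 x a.
      exists c; split.
      + by rewrite inE connect1 // /H /del_edge exc eqxx (negPf ca) (negPf xa).
      + by apply: contraTneq exc => ->; rewrite irr.
      + exact: exc.
  have [S S0 cut] := getS x a exa cxa.
  have [s [[sS xS aS nxa] [[esx esa] [[d [dS esd nxd nad]] K5]]]] :=
    keyK sym irr claw exa (Hcon x a exa cxa) S0 cut.
  set R := del_rel (del_edge e x a) S.
  case: (boolP [exists t, connect R x t && (t != x)]) => [/existsP [t /andP [ct tx]] | /existsPn single].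
    apply: (small [set t | connect R x t] x).
    - apply/subsetP => u; rewrite inE => cu.
      apply: (GC (B := [pred t | t \in A :\ a])) cu => //= u' v cu'.
      rewrite !inE => /andP [ua uA] Ruv; apply/andP; split.
        by apply: contraNneq nxa => va; subst v; exact: connect_trans cu' (connect1 Ruv).
      by apply: clos uA ua _; case/and3P: Ruv => /andP [].
    - by rewrite inE connect0.
    - move=> t' r; rewrite !inE => ct' t'x et'r.
      have t'a : t' != a by apply: contraNneq nxa => ta; subst t'; exact: ct'.
      have t'S := conn_notin xS ct'.
      suff Rt : R t' r by exact: connect_trans ct' (connect1 Rt).
      case rS: (r \in S).
        have [_ [tx' | ta']] := K5 t' r (or_introl ct') rS et'r.
          by rewrite tx' eqxx in t'x.
        by rewrite ta' eqxx in t'a.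
      by rewrite /R /del_rel /del_edge et'r (negPf t'x) (negPf t'a) t'S rS /=.
    - have xt : x != t by rewrite eq_sym.
      have [b [Rxb _]] := first_step ct xt.
      exists b; split.
      + by rewrite inE connect1.
      + by apply: contraTneq Rxb => ->; rewrite /R /del_rel /del_edge irr.
      + by case/and3P: Rxb => /andP [].
  have Nx : forall r, e x r -> r = a \/ r = s.
    move=> r exr; case rS: (r \in S).
      by have [-> _] := K5 x r (or_introl (connect0 _ _)) rS exr; right.
    case: (eqVneq r a) => [-> | ra]; first by left.
    have := single r; rewrite connect1 /=.
      by rewrite negbK => /eqP rx; move: exr; rewrite rx irr.
    by rewrite /R /del_rel /del_edge exr eqxx (negPf ra) (negPf xa) xS rS.
  have sa : s != a by apply: contraNneq aS => <-.
  have sx : s != x by apply: contraNneq xS => <-.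
  have exs : e x s by rewrite sym.
  have sA : s \in A := clos x s xA xa exs.
  have sAa : s \in A :\ a by rewrite !inE sa.
  have cxs : connect (del_edge e x s) x s.
    apply: (@connect_trans _ _ a x s); apply: connect1.
      by rewrite /del_edge exa eqxx (eq_sym a s) (negPf sa) (eq_sym x s) (negPf sx) andbF.
    by rewrite /del_edge (sym a s) esa (eq_sym a x) (negPf xa) (eq_sym a s) (negPf sa).
  have [S2 S20 cut2] := getS x s exs cxs.
  have [s2 [[s2S xS2 sS2 nxs] [[es2x es2s] [_ K5']]]] :=
    keyK sym irr claw exs (Hcon x s exs cxs) S20 cut2.
  have exs2 : e x s2 by rewrite sym.
  have aS2 : a \in S2.
    case: (Nx s2 exs2) => [<- // | s2s].
    by rewrite -s2s s2S in sS2.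
  set R2 := del_rel (del_edge e x s) S2.
  have nsx : ~~ connect R2 s x.
    by rewrite (sym_connect_sym (del_rel_sym S2 (del_edge_sym x s sym))).
  case: (boolP [exists t, connect R2 s t && (t != s)]) => [/existsP [t /andP [ct ts]] | /existsPn single2].
    apply: (small [set t | connect R2 s t] s).
    - apply/subsetP => u; rewrite inE => cu.
      apply: (GC (B := [pred t | t \in A :\ a])) cu => //= u' v cu'.
      rewrite !inE => /andP [ua uA] Ruv; apply/andP; split.
        by apply: contraTneq Ruv => ->; rewrite /R2 /del_rel aS2 !andbF.
      by apply: clos uA ua _; case/and3P: Ruv => /andP [].
    - by rewrite inE connect0.
    - move=> t' r; rewrite !inE => ct' t's et'r.
      have t'x : t' != x by apply: contraNneq nsx => tx; subst t'; exact: ct'.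
      have t'S := conn_notin sS2 ct'.
      suff Rt : R2 t' r by exact: connect_trans ct' (connect1 Rt).
      case rS: (r \in S2).
        have [_ [tx' | ts']] := K5' t' r (or_intror ct') rS et'r.
          by rewrite tx' eqxx in t'x.
        by rewrite ts' eqxx in t's.
      by rewrite /R2 /del_rel /del_edge et'r (negPf t'x) (negPf t's) t'S rS /= ?andbF.
    - have st : s != t by rewrite eq_sym.
      have [b [Rsb _]] := first_step ct st.
      exists b; split.
      + by rewrite inE connect1.
      + by apply: contraTneq Rsb => ->; rewrite /R2 /del_rel /del_edge irr.
      + by case/and3P: Rsb => /andP [].
  have Ns : forall r, e s r -> r = a \/ r = x.
    move=> r esr; case rS: (r \in S2).
      have [-> _] := K5' s r (or_intror (connect0 _ _)) rS esr.
      by case: (Nx s2 exs2) => [-> | s2s]; [left | rewrite -s2s s2S in sS2].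
    case: (eqVneq r x) => [-> | rx]; first by right.
    have := single2 r; rewrite connect1 /=.
      by rewrite negbK => /eqP rs; move: esr; rewrite rs irr.
    by rewrite /R2 /del_rel /del_edge esr (negPf sx) (negPf rx) eqxx sS2 rS.
  case: (Ns d esd) => ?; subst d.
    by rewrite connect0 in nad.
  by rewrite connect0 in nxd.
case: (set_0Vmem [set: T]) => [T0 | [v0 _]].
  apply: nt1 => S /(NC1 sym) [p [q [_ _ _]]].
  by have := in_setT p; rewrite T0 inE.
have [b eb] := nbr v0.
apply: (main _ [set: T] v0 (leqnn _)).
- by rewrite inE.
- by move=> t r; rewrite !inE.
- exists b; split; [by rewrite in_setT | | exact: eb].
  by apply: contraTneq eb => ->; rewrite irr.
Qed.
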